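(* Let $G$ be a Polish group. If $G$ is locally strongly bounded, then every coarsely bounded subset of $G$ is strongly bounded.
   Context: A topological group is Polish if it is separable and completely metrizable. A subset of a topological group $G$ is coarsely bounded if it has finite diameter in every continuous left-invariant metric on $G$. A subset of $G$ is strongly bounded if it has finite diameter in every left-invariant metric on $G$ (not necessarily continuous). $G$ is locally strongly bounded if some open neighborhood of the identity is strongly bounded. *)

(* Defs.v *)
From HB Require Import structures.
From mathcomp Require Import all_boot all_order all_algebra.
From mathcomp Require Import all_classical all_reals all_analysis.
From mathcomp Require Import Rstruct Rstruct_topology.
Set Implicit Arguments. Unset Strict Implicit. Unset Printing Implicit Defensive.
Import Order.TTheory GRing.Theory Num.Theory.
Local Open Scope classical_set_scope.
Local Open Scope ring_scope.

Notation Real := Rdefinitions.R.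

Section Defs.
Variable G : topologicalType.

Definition is_group (mul : G -> G -> G) (inv : G -> G) (e : G) : Prop :=
  [/\ forall x y z, mul x (mul y z) = mul (mul x y) z,
      forall x, mul e x = x /\ mul x e = x &
      forall x, mul (inv x) x = e /\ mul x (inv x) = e].

Definition is_topological_group (mul : G -> G -> G) (inv : G -> G) (e : G) : Prop :=
  [/\ is_group mul inv e,
      continuous (fun p : G * G => mul p.1 p.2) &
      continuous inv].

Definition is_metric (d : G -> G -> Real) : Prop :=
  [/\ forall x y, 0 <= d x y,
      forall x y, d x y = 0 <-> x = y,
      forall x y, d x y = d y x &
      forall x y z, d x z <= d x y + d y z].

Definition left_invariant (mul : G -> G -> G) (d : G -> G -> Real) : Prop :=
  forall g x y, d (mul g x) (mul g y) = d x y.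

Definition continuous_metric (d : G -> G -> Real) : Prop :=
  continuous (fun p : G * G => d p.1 p.2).

Definition finite_diameter (d : G -> G -> Real) (A : set G) : Prop :=
  exists M : Real, forall x y, A x -> A y -> d x y <= M.

Definition coarsely_bounded (mul : G -> G -> G) (A : set G) : Prop :=
  forall d, is_metric d -> left_invariant mul d -> continuous_metric d ->
    finite_diameter d A.

Definition strongly_bounded (mul : G -> G -> G) (A : set G) : Prop :=
  forall d, is_metric d -> left_invariant mul d -> finite_diameter d A.

Definition locally_strongly_bounded (mul : G -> G -> G) (e : G) : Prop :=
  exists U : set G, [/\ open U, U e & strongly_bounded mul U].

Definition metric_compatible (d : G -> G -> Real) : Prop :=
  forall U : set G, open U <->
    (forall x, U x -> exists eps : Real, 0 < eps /\ forall y, d x y < eps -> U y).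

Definition metric_complete (d : G -> G -> Real) : Prop :=
  forall u : nat -> G,
    (forall eps : Real, 0 < eps -> exists N, forall n m, (N <= n)%N -> (N <= m)%N ->
        d (u n) (u m) < eps) ->
    exists l : G, forall eps : Real, 0 < eps -> exists N, forall n, (N <= n)%N ->
        d (u n) l < eps.

Definition separable_space : Prop :=
  exists S : set G, countable S /\ closure S = setT.

Definition completely_metrizable : Prop :=
  exists d, [/\ is_metric d, metric_compatible d & metric_complete d].

Definition polish_space : Prop := separable_space /\ completely_metrizable.

End Defs.

(* Main.v *)
Require Import Defs.
From HB Require Import structures.
From mathcomp Require Import all_boot all_order all_algebra.
From mathcomp Require Import all_classical all_reals all_analysis.
From mathcomp Require Import Rstruct Rstruct_topology.
From mathcomp Require Import lra.
Set Implicit Arguments. Unset Strict Implicit. Unset Printing Implicit Defensive.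
Import Order.TTheory GRing.Theory Num.Theory.
Local Open Scope classical_set_scope.
Local Open Scope ring_scope.

Definition gprod (G : Type) (mul : G -> G -> G) (e : G) (l : seq G) : G :=
  foldr mul e l.
Definition csum (G : Type) (c : G -> Rdefinitions.R) (l : seq G) : Rdefinitions.R :=
  foldr (fun s acc => c s + acc) 0 l.
Definition wt (m : nat) : Rdefinitions.R := ((2%:R : Rdefinitions.R) ^+ m)^-1.

Lemma wt_succ m : wt m.+1 = wt m / 2.
Proof. by rewrite /wt exprS invfM mulrC. Qed.

Lemma wt_gt0 m : 0 < wt m.
Proof. by rewrite /wt invr_gt0 exprn_gt0. Qed.

Lemma wt_le1 m : wt m <= 1.
Proof. rewrite /wt invf_le1; last exact: exprn_gt0. apply: exprn_ege1; lra. Qed.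

Lemma wt_lt_mono j m : wt j < wt m -> (m < j)%N.
Proof.
rewrite /wt ltf_pV2; last 2 first. 1,2: by rewrite posrE exprn_gt0.
by rewrite ltr_eXn2l // ltr1n.
Qed.

Lemma gprod_cat (G : Type) (mul : G -> G -> G) (e : G)
  (assoc : forall x y z, mul x (mul y z) = mul (mul x y) z)
  (idl : forall x, mul e x = x) l1 l2 :
  gprod mul e (l1 ++ l2) = mul (gprod mul e l1) (gprod mul e l2).
Proof. elim: l1 => [|s l1 IH] /=; first by rewrite idl. by rewrite IH assoc. Qed.

Lemma csum_cat (G : Type) (c : G -> Rdefinitions.R) l1 l2 :
  csum c (l1 ++ l2) = csum c l1 + csum c l2.
Proof. elim: l1 => [|s l1 IH] /=; first by rewrite add0r. by rewrite IH addrA. Qed.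

Lemma csum_ge0 (G : Type) (c : G -> Rdefinitions.R) (c0 : forall g, 0 <= c g) l :
  0 <= csum c l.
Proof. elim: l => [|s l IH] //=; exact: addr_ge0. Qed.

Lemma csum_split (G : Type) (c : G -> Rdefinitions.R) (c0 : forall g, 0 <= c g) (l : seq G) (t : Rdefinitions.R) :
  l <> [::] -> 0 <= t -> exists l1 s l2, [/\ l = l1 ++ s :: l2, csum c l1 <= t &
     (t <= csum c l1 + c s \/ l2 = [::])].
Proof.
elim: l t => [|s l IH] t //= _ t0.
case: l IH => [|s' l'] IH.
  by exists [::], s, [::]; split => //=; right.
have [hts|hts] := lerP t (c s).
  by exists [::], s, (s' :: l'); split => //=; left; rewrite add0r.
have [|l1 [s1 [l2 [-> h1 h2]]]] := IH (t - c s) (fun h : s' :: l' = [::] => ltac:(discriminate h)); first by rewrite subr_ge0 ltW.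
exists (s :: l1), s1, l2; split => //=; first by rewrite -lerBrDl.
case: h2 => [h2|->]; last by right.
left; move: h2; rewrite lerBlDl; lra.
Qed.

Lemma kak (G : Type) (mul : G -> G -> G) (e : G)
  (assoc : forall x y z, mul x (mul y z) = mul (mul x y) z)
  (idl : forall x, mul e x = x)
  (c : G -> Rdefinitions.R) (c0 : forall g, 0 <= c g) (V : nat -> set G)
  (Ve : forall m, V m e)
  (cV : forall m g, c g < wt m -> V m.+1 g)
  (V3 : forall m a b b', V m.+1 a -> V m.+1 b -> V m.+1 b' -> V m (mul a (mul b b'))) :
  forall l m, csum c l < wt m -> V m (gprod mul e l).
Proof.
move=> l; move: {2}(size l) (leqnn (size l)) => n.
elim: n l => [|n IH] l hl m hS.
  by case: l hl hS => //= _ _; apply: Ve.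
case: l hl hS => [|s0 l0] hl hS; first exact: Ve.
have hne : s0 :: l0 <> [::] by [].
have S0 := csum_ge0 c0 (s0 :: l0).
have [|l1 [s [l2 [El h1 h2]]]] := csum_split c0 (t := csum c (s0 :: l0) / 2) hne.
  lra.
move: hl hS S0 h2 h1; rewrite El gprod_cat // csum_cat size_cat /= => hl hS S0 h2 h1.
have g1 := csum_ge0 c0 l1; have g2 := csum_ge0 c0 l2; have gs := c0 s.
have ws := wt_succ m; have wp := wt_gt0 m.
apply: V3.
- apply: IH; first by move: hl; rewrite addnS ltnS; apply: leq_trans; apply: leq_addr.
  lra.
- apply: cV; lra.
- apply: IH; first by move: hl; rewrite addnS ltnS; apply: leq_trans; apply: leq_addl.
  case: h2 => [h2|E2]; last by move: hS S0 h1; rewrite E2 /=; lra.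
  lra.
Qed.

Lemma dom (G : Type) (mul : G -> G -> G) (e : G)
  (assoc : forall x y z, mul x (mul y z) = mul (mul x y) z)
  (idl : forall x, mul e x = x)
  (c : G -> Rdefinitions.R) (c0 : forall g, 0 <= c g) (V0 : set G)
  (K : forall l, csum c l < 1 -> V0 (gprod mul e l))
  (d : G -> G -> Rdefinitions.R) (M : Rdefinitions.R) (M0 : 0 <= M)
  (dV : forall g, V0 g -> d e g <= M) (dc : forall g, d e g <= c g + M)
  (d3 : forall a b b', d e (mul a (mul b b')) <= d e a + d e b + d e b') :
  forall l, d e (gprod mul e l) <= (6 * M + 1) * csum c l + M.
Proof.
move=> l; move: {2}(size l) (leqnn (size l)) => n.
elim: n l => [|n IH] l hl.
  case: l hl => //= _; rewrite mulr0 add0r; apply: dV.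
  by have := K [::] ltr01.
have S0 := csum_ge0 c0 l.
have [lt1|ge1] := ltrP (csum c l) 1.
  apply: le_trans (dV _ (K _ lt1)) _; rewrite lerDr; apply: mulr_ge0 => //; lra.
case: l hl S0 ge1 => [|s0 l0] hl S0 ge1; first by move: ge1 => /=; lra.
have hne : s0 :: l0 <> [::] by [].
have [|l1 [s [l2 [El h1 h2]]]] := csum_split c0 (t := 1 / 2) hne.
  lra.
move: hl S0 ge1 h2 h1; rewrite El gprod_cat // csum_cat size_cat /= => hl S0 ge1 h2 h1.
have g1 := csum_ge0 c0 l1; have g2 := csum_ge0 c0 l2; have gs := c0 s.
have P1 : d e (gprod mul e l1) <= M by apply: dV; apply: K; lra.
have P2 : d e (gprod mul e l2) <= (6 * M + 1) * csum c l2 + M.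
  by apply: IH; move: hl; rewrite addnS ltnS; apply: leq_trans; apply: leq_addl.
have Ps := dc s.
have h3 := d3 (gprod mul e l1) s (gprod mul e l2).
have half : 1 / 2 <= csum c l1 + c s.
  case: h2 => // E2; move: ge1; rewrite E2 /=; lra.
have hm : M * (1 / 2) <= M * (csum c l1 + c s) by apply: ler_wpM2l.
nra.
Qed.
Lemma mul_nbhs (G : topologicalType) (mul : G -> G -> G) (a b : G) (W : set G) :
  continuous (fun p : G * G => mul p.1 p.2) -> nbhs (mul a b) W ->
  exists2 A, nbhs a A & exists2 B, nbhs b B & forall x y, A x -> B y -> W (mul x y).
Proof.
move=> Hc hW; have := Hc (a, b) W hW.
case => [[A B]] /= [hA hB] sub.
exists A => //; exists B => // x y Ax By.
exact: (sub (x, y)).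
Qed.

Lemma ball_nbhs (G : topologicalType) (d0 : G -> G -> Rdefinitions.R) :
  is_metric d0 -> metric_compatible d0 ->
  forall x (r : Rdefinitions.R), 0 < r -> nbhs x [set y | d0 x y < r].
Proof.
case=> d0p d0z d0s d0t dc x r r0.
apply: open_nbhs_nbhs; split; last by rewrite /= (proj2 (d0z x x) erefl).
apply/dc => y /= hy; exists (r - d0 x y); split; first by rewrite subr_gt0.
move=> z hz; have := d0t x y z; lra.
Qed.

Lemma cont_left (G : topologicalType) (mul : G -> G -> G) (inv : G -> G) (a : G) (W : set G) :
  continuous (fun p : G * G => mul p.1 p.2) -> continuous inv ->
  nbhs (mul (inv a) a) W ->
  nbhs a [set x | W (mul (inv a) x) /\ W (mul (inv x) a)].
Proof.
move=> Hm Hi hW; apply: filterI.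
- have [A hA [B hB sub]] := mul_nbhs Hm hW.
  apply: filterS hB => x Bx; apply: sub => //; exact: nbhs_singleton.
- have [A hA [B hB sub]] := mul_nbhs Hm hW.
  have hA' : nbhs a (inv @^-1` A) by apply: Hi.
  apply: filterS hA' => x Ax; apply: sub => //; exact: nbhs_singleton.
Qed.

Lemma wt_small (eps : Rdefinitions.R) : 0 < eps -> exists m, ((2%:R : Rdefinitions.R) ^+ m)^-1 < eps.
Proof.
move=> e0.
have [m h1] : exists m : nat, eps^-1 < m%:R.
  by exists (Num.bound (eps^-1)); apply: archi_boundP; rewrite invr_ge0 ltW.
exists m.
have h2 : (m%:R : Rdefinitions.R) <= 2%:R ^+ m.
  rewrite -natrX ler_nat; apply: ltnW; apply: ltn_expl; done.
have h3 : 0 < (2%:R : Rdefinitions.R) ^+ m by apply: exprn_gt0.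
rewrite invf_plt ?posrE //; lra.
Qed.

Lemma tri_nbhs (G : topologicalType) (mul : G -> G -> G) (e : G) :
  mul e e = e -> continuous (fun p : G * G => mul p.1 p.2) ->
  forall W, nbhs e W -> exists2 V, nbhs e V &
    forall a b b', V a -> V b -> V b' -> W (mul a (mul b b')).
Proof.
move=> ide Hm W hW.
have hW' : nbhs (mul e e) W by rewrite ide.
have [A hA [B hB sub]] := mul_nbhs Hm hW'.
have hV1 : nbhs (mul e e) (A `&` B) by rewrite ide; apply: filterI.
have [A' hA' [B' hB' sub']] := mul_nbhs Hm hV1.
exists (A `&` (A' `&` B')); first by apply: filterI => //; apply: filterI.
move=> a b b' [Aa _] [_ [Ab _]] [_ [_ Bb']].
apply: sub => //; exact: (sub' _ _ Ab Bb').2.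
Qed.

Lemma tri_fun (G : topologicalType) (mul : G -> G -> G) (e : G) :
  mul e e = e -> continuous (fun p : G * G => mul p.1 p.2) ->
  exists T : set G -> set G, forall W, nbhs e W -> nbhs e (T W) /\
    forall a b b', T W a -> T W b -> T W b' -> W (mul a (mul b b')).
Proof.
move=> ide Hm.
have /choice[T HT] : forall W : set G, exists V : set G, nbhs e W -> nbhs e V /\
    forall a b b', V a -> V b -> V b' -> W (mul a (mul b b')).
  move=> W; have [hW|hW] := pselect (nbhs e W).
    by have [V hV h] := tri_nbhs ide Hm hW; exists V.
  by exists W.
by exists T.
Qed.

Theorem proposition2p12 (G : topologicalType) (mul : G -> G -> G) (inv : G -> G) (e : G) :
  is_topological_group mul inv e ->
  polish_space G ->
  locally_strongly_bounded mul e ->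
  forall A : set G, coarsely_bounded mul A -> strongly_bounded mul A.
Proof.
case=> [[assoc ide inve] Hm Hi] [_ [d0 [d0m d0c _]]] [U [Uo Ue Usb]] A HA d dm dli.
have idl : forall x, mul e x = x by move=> x; case: (ide x).
have idr : forall x, mul x e = x by move=> x; case: (ide x).
have invl : forall x, mul (inv x) x = e by move=> x; case: (inve x).
have invr : forall x, mul x (inv x) = e by move=> x; case: (inve x).
have [dpos dz dsym dtri] := dm.
have [d0pos d0z d0sym d0tri] := d0m.
have [M HM] := Usb d dm dli.
have M0 : 0 <= M by have := HM e e Ue Ue; have := dpos e e; lra.
have [T HT] := tri_fun (idl e) Hm.
pose B m := [set y | d0 e y < wt m].
have hB : forall m, nbhs e (B m) := fun m => ball_nbhs d0m d0c e (wt_gt0 m).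
pose V := fix V m := if m is m'.+1 then T (V m' `&` B m) else U `&` B 0.
have hU : nbhs e U by apply: open_nbhs_nbhs; split.
have hV : forall m, nbhs e (V m).
  elim => [|m IH] /=; first exact: filterI.
  by apply: (HT _ _).1; apply: filterI.
have Ve : forall m, V m e := fun m => nbhs_singleton (hV m).
have V3' : forall m a b b', V m.+1 a -> V m.+1 b -> V m.+1 b' ->
    (V m `&` B m.+1) (mul a (mul b b')).
  by move=> m a b b' ha hb hb'; exact: ((HT _ (filterI (hV m) (hB m.+1))).2 a b b' ha hb hb').
have V3 : forall m a b b', V m.+1 a -> V m.+1 b -> V m.+1 b' -> V m (mul a (mul b b')).
  by move=> m a b b' ha hb hb'; case: (V3' m a b b' ha hb hb').
have Vdec : forall m g, V m.+1 g -> V m g.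
  by move=> m g h; have := V3 m g e e h (Ve _) (Ve _); rewrite idl idr.
have Vmono : forall j m g, (m <= j)%N -> V j g -> V m g.
  elim => [|j IH] m g; first by rewrite leqn0 => /eqP ->.
  rewrite leq_eqVlt => /orP [/eqP -> //|]; rewrite ltnS => hmj h.
  by apply: IH hmj _; apply: Vdec.
have VB : forall m g, V m g -> B m g.
  case => [|m] g h; first by case: h.
  by have := V3' m g e e h (Ve _) (Ve _); rewrite idl idr; case.
pose E g := [set r | (exists j, V j g /\ r = wt j) \/ r = 2 + d e g].
pose c g := inf (E g).
have Ene : forall g, E g !=set0 by move=> g; exists (2 + d e g); right.
have Elb0 : forall g, lbound (E g) 0.
  move=> g r [[j [_ ->]]| ->]; first exact: ltW (wt_gt0 j).
  by have := dpos e g; lra.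
have Elb : forall g, has_lbound (E g) by move=> g; exists 0; apply: Elb0.
have c0 : forall g, 0 <= c g by move=> g; apply: lb_le_inf.
have cV : forall m g, c g < wt m -> V m.+1 g.
  move=> m g h; have [r [[j [Vj ->]]| ->] lt] := inf_lt (Ene g) h.
    by apply: Vmono Vj; apply: wt_lt_mono.
  by have := wt_le1 m; have := dpos e g; lra.
have dV : forall g, V 0 g -> d e g <= M by move=> g [Ug _]; apply: HM.
have dc : forall g, d e g <= c g + M.
  move=> g; suff : d e g - M <= c g by lra.
  apply: lb_le_inf => // r [[j [Vj ->]]| ->].
    have := dV g (Vmono j 0 g isT Vj); have := wt_gt0 j; lra.
  by have := M0; lra.
have K := kak assoc idl c0 Ve cV V3.
have K0 : forall l, csum c l < 1 -> V 0 (gprod mul e l).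
  by move=> l; have := K l 0; rewrite /wt expr0 invr1.
have d3 : forall a b b', d e (mul a (mul b b')) <= d e a + d e b + d e b'.
  move=> a b b'.
  have h1 := dtri e a (mul a (mul b b')).
  have h2 := dtri e b (mul b b').
  have h3 : d a (mul a (mul b b')) = d e (mul b b') by rewrite -{1}(idr a) dli.
  have h4 : d b (mul b b') = d e b' by rewrite -{1}(idr b) dli.
  lra.
have D := dom assoc idl c0 K0 M0 dV dc d3.
pose L : Rdefinitions.R := 6 * M + 1.
have L0 : 0 < L by rewrite /L; lra.
pose F g := [set r | exists l, gprod mul e l = g /\ r = csum c l].
pose ell g := inf (F g).
have Fne : forall g, F g !=set0.
  by move=> g; exists (csum c [:: g]); exists [:: g]; split => //=; rewrite idr.
have Flb0 : forall g, lbound (F g) 0 by move=> g r [l [_ ->]]; apply: csum_ge0.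
have Flb : forall g, has_lbound (F g) by move=> g; exists 0; apply: Flb0.
have ell0 : forall g, 0 <= ell g by move=> g; apply: lb_le_inf.
have ell_le : forall g l, gprod mul e l = g -> ell g <= csum c l.
  by move=> g l h; apply: ge_inf => //; exists l.
have ellV : forall m g, V m g -> ell g <= wt m.
  move=> m g h; have := ell_le g [:: g]; rewrite /= idr addr0 => /(_ erefl) h1.
  by apply: le_trans h1 _; apply: ge_inf => //; left; exists m.
have ell_e : ell e = 0.
  by apply/eqP; rewrite eq_le ell0 andbT; have := ell_le e [::] erefl.
have ell_sub : forall g h, ell (mul g h) <= ell g + ell h.
  move=> g h; suff : ell (mul g h) - ell h <= ell g by lra.
  apply: lb_le_inf => // _ [l1 [E1 ->]].
  suff : ell (mul g h) - csum c l1 <= ell h by lra.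
  apply: lb_le_inf => // _ [l2 [E2 ->]].
  have := ell_le (mul g h) (l1 ++ l2); rewrite gprod_cat // csum_cat E1 E2.
  move=> /(_ erefl); lra.
have ell_zero : forall g, ell g = 0 -> forall m, V m g.
  move=> g h m; have lt : ell g < wt m by rewrite h; apply: wt_gt0.
  have [_ [l [E1 ->]] lt'] := inf_lt (Fne g) lt.
  by rewrite -E1; apply: K.
have ell_dom : forall g, d e g <= L * ell g + M.
  move=> g; suff : L^-1 * (d e g - M) <= ell g.
    by rewrite ler_pdivrMl // => hh; move: hh; rewrite /L; lra.
  apply: lb_le_inf => // _ [l [E1 ->]].
  by rewrite ler_pdivrMl //; have := D l; rewrite E1 /L; lra.
have gl1 : forall x y z, mul (mul (inv x) y) (mul (inv y) z) = mul (inv x) z.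
  by move=> x y z; rewrite -assoc (assoc y) invr idl.
have gl2 : forall g x y, mul (inv (mul g x)) (mul g y) = mul (inv x) y.
  move=> g x y; have -> : mul g y = mul (mul g x) (mul (inv x) y).
    by rewrite -assoc (assoc x) invr idl.
  by rewrite assoc invl idl.
pose rho x y := ell (mul (inv x) y) + ell (mul (inv y) x).
have rho_tri : forall x y z, rho x z <= rho x y + rho y z.
  move=> x y z; rewrite /rho -(gl1 x y z) -(gl1 z y x).
  have := ell_sub (mul (inv x) y) (mul (inv y) z).
  have := ell_sub (mul (inv z) y) (mul (inv y) x); lra.
have rho_sym : forall x y, rho x y = rho y x by move=> x y; rewrite /rho addrC.
have rhom : is_metric rho.
  split => //.
  - by move=> x y; apply: addr_ge0.
  - move=> x y; split; last by move=> ->; rewrite /rho invl ell_e addr0.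
    move=> h; have h0 : ell (mul (inv x) y) = 0.
      by have := ell0 (mul (inv x) y); have := ell0 (mul (inv y) x); rewrite /rho in h; lra.
    have Vall := ell_zero _ h0.
    have dd : d0 e (mul (inv x) y) = 0.
      apply/eqP; rewrite eq_le d0pos andbT; rewrite leNgt; apply/negP => hpos.
      have [m hm] := wt_small hpos.
      by have := VB m _ (Vall m); rewrite /B /= /wt; lra.
    move/d0z: dd => dd.
    by rewrite -[y](idl y) -(invr x) -assoc -dd idr.
have rholi : left_invariant mul rho by move=> g x y; rewrite /rho !gl2.
have rhoc : continuous_metric rho.
  move=> [a b]; rewrite /continuous_at; apply/(@cvgrPdist_lt _ Rdefinitions.R^o) => eps e0.
  have e4 : 0 < eps / 4 by lra.
  have [m hm] := wt_small e4.
  have Na := @cont_left G mul inv a (V m) Hm Hi ltac:(by rewrite invl; apply: hV).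
  have Nb := @cont_left G mul inv b (V m) Hm Hi ltac:(by rewrite invl; apply: hV).
  exists ([set x | V m (mul (inv a) x) /\ V m (mul (inv x) a)],
          [set x | V m (mul (inv b) x) /\ V m (mul (inv x) b)]); first by split.
  move=> [x y] /= [[h1 h2] [h3 h4]].
  have r1 : rho a x <= 2 * wt m.
    by rewrite /rho; have := ellV m _ h1; have := ellV m _ h2; lra.
  have r2 : rho b y <= 2 * wt m.
    by rewrite /rho; have := ellV m _ h3; have := ellV m _ h4; lra.
  have t1 := rho_tri a x b; have t2 := rho_tri x y b.
  have t3 := rho_tri x a y; have t4 := rho_tri a b y.
  have s1 := rho_sym a x; have s2 := rho_sym b y.
  rewrite /wt in hm r1 r2.
  rewrite ltr_norml; apply/andP; split; lra.
have [Mr HMr] := HA rho rhom rholi rhoc.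
exists (L * Mr + M) => x y Ax Ay.
have -> : d x y = d e (mul (inv x) y).
  by rewrite -(dli x e (mul (inv x) y)) idr assoc invr idl.
have h1 := ell_dom (mul (inv x) y).
have h2 : ell (mul (inv x) y) <= Mr.
  by have := HMr x y Ax Ay; have := ell0 (mul (inv y) x); rewrite /rho; lra.
have := ler_wpM2l (ltW L0) h2; lra.
Qed.
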